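(* Let $\mathcal R^{rrc}$ be a rich single-crossing domain of restricted classical preferences, $[\underline R,\overline R]\subseteq\mathcal R^{rrc}$ a closed interval, and $F:[\underline R,\overline R]\to\mathbb{Z}$ a mechanism (so $F(R)\in[0,t_R]\times[0,1]$ for all $R$) with finite range such that $F(R)\,I\,(0,0)$ implies $F(R)=(0,0)$. Then $F$ is restricted strategy-proof if and only if $F$ is monotone and $V^F$ is continuous.
   Context: $\mathbb{Z}=[0,\infty)\times[0,1]$; $(t',q')<(t'',q'')$ means $t'<t''$, $q'<q''$; $x\le y$ means $x=y$ or $x<y$; $\square(z)=\{x:x\le z\}$. A restricted classical preference is a complete transitive relation $R$ (strict part $P$, indifference $I$) on $[0,t_R]\times[0,1]$, $0<t_R<\infty$, such that: for $q\in(0,1]$, $t_R\ge t''>t'\ge0$ implies $(t',q)P(t'',q)$; for $t\in[0,t_R)$, $1\ge q''>q'\ge0$ implies $(t,q'')P(t,q')$; $(0,0)I(t_R,q)$ for all $q$ and $(0,0)I(t,0)$ for $t\in[0,t_R)$; $R$ is continuous on $[0,t_R]\times[0,1]$. Two such $R',R''$ with $t_{R'}\ne t_{R''}$ satisfy single-crossing if for every $(t,q)$ with $q>0$, $t<\min\{t_{R'},t_{R''}\}$ their indifference sets through $(t,q)$ meet only at $(t,q)$. A rich single-crossing domain $\mathcal R^{rrc}$ is a set of pairwise single-crossing restricted classical preferences such that for all $x'<x''$ some member is indifferent between them. It is ordered by $R'\prec R''$ iff $t_{R'}<t_{R''}$ (this coincides with $R''$ cutting $R'$ from above, i.e. $\square(z)\cap\{x:xR''z\}\subseteq\square(z)\cap\{x:xR'z\}$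 at bundles $z=(t,q)$ with $q>0,t<t_{R'}$), with the corresponding order topology; $[\underline R,\overline R]=\{R:\underline R\precsim R\precsim\overline R\}$. A mechanism is $F:[\underline R,\overline R]\to\mathbb{Z}$ with $F(R)\in[0,t_R]\times[0,1]$. $F$ is restricted strategy-proof if for all $R,R'$ with $F(R')\in[0,t_R]\times[0,1]$, $F(R)\,R\,F(R')$. $F$ is monotone if $R'\prec R''$ implies $F(R')\le F(R'')$. $V^F$ is continuous if for any $R$ and any monotone sequence $R^n\to R$ (i.e. $R^n\precsim R^{n+1}$ for all $n$, or $R^{n+1}\precsim R^n$ for all $n$), $F(R^n)$ converges to some $z=(t_z,q_z)$ with $t_z\le t_R$ and $z\,I\,F(R)$. *)

(* Defs.v *)
From Stdlib Require Import Reals List.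
Open Scope R_scope.

(* A bundle (t, q) in Z = [0,oo) x [0,1]: t = payment, q = object quality/quantity. *)
Definition bundle : Type := (R * R)%type.

Definition inZ (x : bundle) : Prop :=
  0 <= fst x /\ 0 <= snd x <= 1.

Definition blt (x y : bundle) : Prop := fst x < fst y /\ snd x < snd y.
Definition ble (x y : bundle) : Prop := x = y \/ blt x y.

Definition in_box (t : R) (x : bundle) : Prop :=
  0 <= fst x <= t /\ 0 <= snd x <= 1.

(* A candidate preference: its bound t_R and its weak preference relation R
   (x R y read "x is at least as good as y"); only its values on
   [0,t_R] x [0,1] are meaningful. *)
Record pref : Type := Pref { tR : R; rel : bundle -> bundle -> Prop }.

Definition P (Rp : pref) (x y : bundle) : Prop := rel Rp x y /\ ~ rel Rp y x.
Definition I (Rp : pref) (x y : bundle) : Prop := rel Rp x y /\ rel Rp y x.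

Definition bbox (Rp : pref) (x : bundle) : Prop := in_box (tR Rp) x.

Definition bcv (x : nat -> bundle) (z : bundle) : Prop :=
  Un_cv (fun n => fst (x n)) (fst z) /\ Un_cv (fun n => snd (x n)) (snd z).

(* continuity of R on [0,t_R] x [0,1]: upper and lower contour sets of every
   bundle are closed (relative to the box) *)
Definition rel_continuous (Rp : pref) : Prop :=
  forall (y : bundle) (x : nat -> bundle) (z : bundle),
    bbox Rp y -> (forall n, bbox Rp (x n)) -> bbox Rp z -> bcv x z ->
    ((forall n, rel Rp (x n) y) -> rel Rp z y) /\
    ((forall n, rel Rp y (x n)) -> rel Rp y z).

Definition restricted_classical (Rp : pref) : Prop :=
  0 < tR Rp /\
  (forall x y, bbox Rp x -> bbox Rp y -> rel Rp x y \/ rel Rp y x) /\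
  (forall x y z, bbox Rp x -> bbox Rp y -> bbox Rp z ->
     rel Rp x y -> rel Rp y z -> rel Rp x z) /\
  (forall q t1 t2, 0 < q <= 1 -> 0 <= t1 -> t1 < t2 -> t2 <= tR Rp ->
     P Rp (t1, q) (t2, q)) /\
  (forall t q1 q2, 0 <= t < tR Rp -> 0 <= q1 -> q1 < q2 -> q2 <= 1 ->
     P Rp (t, q2) (t, q1)) /\
  (forall q, 0 <= q <= 1 -> I Rp (0, 0) (tR Rp, q)) /\
  (forall t, 0 <= t < tR Rp -> I Rp (0, 0) (t, 0)) /\
  rel_continuous Rp.

Definition single_crossing (R1 R2 : pref) : Prop :=
  tR R1 <> tR R2 /\
  forall t q, 0 < q <= 1 -> 0 <= t -> t < Rmin (tR R1) (tR R2) ->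
    forall x, bbox R1 x -> bbox R2 x ->
      I R1 x (t, q) -> I R2 x (t, q) -> x = (t, q).

Definition rich_single_crossing (D : pref -> Prop) : Prop :=
  (forall Rp, D Rp -> restricted_classical Rp) /\
  (forall R1 R2, D R1 -> D R2 -> R1 <> R2 -> single_crossing R1 R2) /\
  (forall x1 x2, inZ x1 -> inZ x2 -> blt x1 x2 ->
     exists Rp, D Rp /\ bbox Rp x1 /\ bbox Rp x2 /\ I Rp x1 x2).

Definition prec (R1 R2 : pref) : Prop := tR R1 < tR R2.
Definition precsim (R1 R2 : pref) : Prop := tR R1 <= tR R2.

Definition interval (D : pref -> Prop) (Rlo Rhi : pref) (Rp : pref) : Prop :=
  D Rp /\ precsim Rlo Rp /\ precsim Rp Rhi.

(* convergence of a sequence in D with respect to the order topology of D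
   (generated by the open rays {x | x prec b} and {x | a prec x}, a, b in D) *)
Definition order_cv (D : pref -> Prop) (Rs : nat -> pref) (Rp : pref) : Prop :=
  (forall b, D b -> prec Rp b -> exists N, forall n, (N <= n)%nat -> prec (Rs n) b) /\
  (forall a, D a -> prec a Rp -> exists N, forall n, (N <= n)%nat -> prec a (Rs n)).

Definition monotone_seq (Rs : nat -> pref) : Prop :=
  (forall n, precsim (Rs n) (Rs (S n))) \/ (forall n, precsim (Rs (S n)) (Rs n)).

Definition is_mechanism (dom : pref -> Prop) (F : pref -> bundle) : Prop :=
  forall Rp, dom Rp -> bbox Rp (F Rp).

Definition finite_range (dom : pref -> Prop) (F : pref -> bundle) : Prop :=
  exists l : list bundle, forall Rp, dom Rp -> In (F Rp) l.

Definition restricted_SP (dom : pref -> Prop) (F : pref -> bundle) : Prop :=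
  forall Rp Rq, dom Rp -> dom Rq -> bbox Rp (F Rq) -> rel Rp (F Rp) (F Rq).

Definition monotone_mech (dom : pref -> Prop) (F : pref -> bundle) : Prop :=
  forall R1 R2, dom R1 -> dom R2 -> prec R1 R2 -> ble (F R1) (F R2).

Definition VF_continuous (D dom : pref -> Prop) (F : pref -> bundle) : Prop :=
  forall (Rp : pref) (Rs : nat -> pref),
    dom Rp -> (forall n, dom (Rs n)) -> monotone_seq Rs -> order_cv D Rs Rp ->
    exists z : bundle, bcv (fun n => F (Rs n)) z /\ fst z <= tR Rp /\
      bbox Rp z /\ I Rp z (F Rp).

(* Main.v *)
Require Import Defs.
From Stdlib Require Import Reals List Lra Lia Classical ClassicalEpsilon.
Open Scope R_scope.


Lemma cv_lin (a b k : R) : 1 <= k -> Un_cv (fun n => a + b / (INR n + k)) a.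
Proof.
  intros Hk eps He.
  destruct (INR_unbounded (Rabs b / eps)) as [N HN'].
  exists N. intros n Hn. unfold Rdist.
  replace (a + b / (INR n + k) - a) with (b / (INR n + k)) by ring.
  assert (Hn' : INR N <= INR n) by (apply le_INR; lia).
  assert (Hpos : 0 < INR n + k) by (pose proof (pos_INR n); lra).
  assert (Hb : Rabs b < eps * INR N).
  { apply (Rmult_lt_reg_r (/ eps)). apply Rinv_0_lt_compat; lra.
    replace (eps * INR N * / eps) with (INR N) by (field; lra). exact HN'. }
  assert (Hb2 : Rabs b < eps * (INR n + k)) by nra.
  pose proof (Rle_abs b). pose proof (Rle_abs (-b)). rewrite Rabs_Ropp in *.
  apply Rabs_def1.
  - apply (Rmult_lt_reg_r (INR n + k)); [lra|].
    replace (b / (INR n + k) * (INR n + k)) with b by (field; lra). lra.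
  - apply (Rmult_lt_reg_r (INR n + k)); [lra|].
    replace (b / (INR n + k) * (INR n + k)) with b by (field; lra). lra.
Qed.

Lemma cv_const (a : R) : Un_cv (fun _ => a) a.
Proof. intros eps He. exists 0%nat. intros. unfold Rdist. rewrite Rminus_diag, Rabs_R0. lra. Qed.


Definition rc := restricted_classical.

Ltac bb := unfold bbox, in_box in *; simpl in *; lra.


Lemma rc_pos Rp : rc Rp -> 0 < tR Rp.
Proof. intros H; apply H. Qed.
Lemma rc_comp Rp x y : rc Rp -> bbox Rp x -> bbox Rp y -> rel Rp x y \/ rel Rp y x.
Proof. intros H; apply H. Qed.
Lemma rc_trans Rp x y z : rc Rp -> bbox Rp x -> bbox Rp y -> bbox Rp z ->
  rel Rp x y -> rel Rp y z -> rel Rp x z.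
Proof. intros H; destruct H as (_&_&H&_). apply H. Qed.
Lemma rc_money Rp q t1 t2 : rc Rp -> 0 < q <= 1 -> 0 <= t1 -> t1 < t2 -> t2 <= tR Rp ->
  P Rp (t1, q) (t2, q).
Proof. intros H; destruct H as (_&_&_&H&_). apply H. Qed.
Lemma rc_qual Rp t q1 q2 : rc Rp -> 0 <= t < tR Rp -> 0 <= q1 -> q1 < q2 -> q2 <= 1 ->
  P Rp (t, q2) (t, q1).
Proof. intros H; destruct H as (_&_&_&_&H&_). apply H. Qed.
Lemma rc_zT Rp q : rc Rp -> 0 <= q <= 1 -> I Rp (0,0) (tR Rp, q).
Proof. intros H; destruct H as (_&_&_&_&_&H&_). apply H. Qed.
Lemma rc_z0 Rp t : rc Rp -> 0 <= t < tR Rp -> I Rp (0,0) (t, 0).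
Proof. intros H; destruct H as (_&_&_&_&_&_&H&_). apply H. Qed.
Lemma rc_cont Rp : rc Rp -> rel_continuous Rp.
Proof. intros H; apply H. Qed.

Lemma rc_cont1 Rp y x z : rc Rp -> bbox Rp y -> (forall n, bbox Rp (x n)) -> bbox Rp z ->
  bcv x z -> (forall n, rel Rp (x n) y) -> rel Rp z y.
Proof. intros H Hy Hx Hz Hc Hr. apply (rc_cont Rp H y x z Hy Hx Hz Hc). exact Hr. Qed.
Lemma rc_cont2 Rp y x z : rc Rp -> bbox Rp y -> (forall n, bbox Rp (x n)) -> bbox Rp z ->
  bcv x z -> (forall n, rel Rp y (x n)) -> rel Rp y z.
Proof. intros H Hy Hx Hz Hc Hr. apply (rc_cont Rp H y x z Hy Hx Hz Hc). exact Hr. Qed.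

Lemma rc_refl Rp x : rc Rp -> bbox Rp x -> rel Rp x x.
Proof. intros H Hx. destruct (rc_comp Rp x x H Hx Hx); auto. Qed.

Lemma PR_trans Rp a b c : rc Rp -> bbox Rp a -> bbox Rp b -> bbox Rp c ->
  P Rp a b -> rel Rp b c -> P Rp a c.
Proof.
  intros H Ha Hb Hc [H1 H2] H3. split.
  - apply rc_trans with b; auto.
  - intro H4. apply H2. apply rc_trans with c; auto.
Qed.
Lemma RP_trans Rp a b c : rc Rp -> bbox Rp a -> bbox Rp b -> bbox Rp c ->
  rel Rp a b -> P Rp b c -> P Rp a c.
Proof.
  intros H Ha Hb Hc H1 [H2 H3]. split.
  - apply rc_trans with b; auto.
  - intro H4. apply H3. apply rc_trans with a; auto.
Qed.
Lemma P_R Rp a b : P Rp a b -> rel Rp a b.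
Proof. intros [h _]; exact h. Qed.
Lemma notP Rp a b : rc Rp -> bbox Rp a -> bbox Rp b -> ~ P Rp a b -> rel Rp b a.
Proof.
  intros H Ha Hb Hn. destruct (classic (rel Rp b a)) as [h|h]; auto.
  destruct (rc_comp Rp a b H Ha Hb) as [h'|h']; auto. exfalso; apply Hn; split; auto.
Qed.
Lemma P_irrefl Rp a : ~ P Rp a a.
Proof. intros [h1 h2]; auto. Qed.
Lemma P_notR Rp a b : P Rp a b -> ~ rel Rp b a.
Proof. intros [_ h]; auto. Qed.

Lemma rc_Z0 Rp t : rc Rp -> 0 <= t <= tR Rp -> I Rp (t, 0) (0, 0).
Proof.
  intros H Ht. destruct (Rlt_or_le t (tR Rp)).
  - destruct (rc_z0 Rp t H) as [a b]; [lra|]. split; auto.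
  - replace t with (tR Rp) by lra. destruct (rc_zT Rp 0 H) as [a b]; [lra|]. split; auto.
Qed.
Lemma rc_ZT Rp q : rc Rp -> 0 <= q <= 1 -> I Rp (tR Rp, q) (0, 0).
Proof. intros H Hq. destruct (rc_zT Rp q H Hq) as [a b]. split; auto. Qed.

Lemma I_trans Rp a b c : rc Rp -> bbox Rp a -> bbox Rp b -> bbox Rp c ->
  I Rp a b -> I Rp b c -> I Rp a c.
Proof. intros H Ha Hb Hc [h1 h2] [h3 h4]. split; [apply rc_trans with b|apply rc_trans with b]; auto. Qed.
Lemma I_sym Rp a b : I Rp a b -> I Rp b a.
Proof. intros [h1 h2]; split; auto. Qed.

Lemma rc_W Rp ta qa tb qb : rc Rp -> 0 <= ta <= tb -> tb <= tR Rp -> 0 <= qb <= qa -> qa <= 1 ->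
  rel Rp (ta, qa) (tb, qb).
Proof.
  intros H H1 H2 H3 H4.
  assert (Hpos := rc_pos Rp H).
  assert (S1 : rel Rp (ta, qa) (tb, qa)).
  { destruct (Req_dec ta tb) as [e|ne].
    - subst. apply rc_refl; auto; bb.
    - destruct (Req_dec qa 0) as [e|ne2].
      + subst. apply rc_trans with (0,0); auto; try bb.
        * apply (rc_Z0 Rp ta H); lra.
        * apply (rc_Z0 Rp tb H); lra.
      + apply P_R, rc_money; auto; lra. }
  assert (S2 : rel Rp (tb, qa) (tb, qb)).
  { destruct (Req_dec qa qb) as [e|ne].
    - subst. apply rc_refl; auto; bb.
    - destruct (Req_dec tb (tR Rp)) as [e|ne2].
      + rewrite e. apply rc_trans with (0,0); auto; try bb.
        * apply (rc_ZT Rp qa H); lra.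
        * apply (rc_ZT Rp qb H); lra.
      + apply P_R, rc_qual; auto; lra. }
  apply rc_trans with (tb, qa); auto; bb.
Qed.

Lemma rc_NZ Rp t q : rc Rp -> 0 < q <= 1 -> 0 <= t < tR Rp -> P Rp (t, q) (0, 0).
Proof.
  intros H Hq Ht. apply PR_trans with (tR Rp, q); auto; try bb.
  - apply rc_money; auto; lra.
  - apply (rc_ZT Rp q H); lra.
Qed.

Lemma rc_dstrict Rp ta qa tb qb : rc Rp -> 0 <= ta <= tb -> tb <= tR Rp -> 0 <= qb <= qa -> qa <= 1 ->
  (ta, qa) <> (tb, qb) -> 0 < qa -> ta < tR Rp -> P Rp (ta, qa) (tb, qb).
Proof.
  intros H H1 H2 H3 H4 Hne Hqa Hta.
  destruct (Rlt_or_le ta tb).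
  - apply PR_trans with (tb, qa); auto; try bb.
    + apply rc_money; auto; lra.
    + apply rc_W; auto; lra.
  - assert (ta = tb) by lra. subst.
    assert (qb < qa). { destruct (Req_dec qa qb); [subst; congruence|lra]. }
    apply rc_qual; auto; lra.
Qed.


Lemma frac_bounds c n k : 0 <= c -> 1 <= k -> 0 <= c / (INR n + k) <= c.
Proof.
  intros Hc Hk. pose proof (pos_INR n). split.
  - unfold Rdiv. apply Rmult_le_pos; [lra|]. left. apply Rinv_0_lt_compat; lra.
  - apply (Rmult_le_reg_r (INR n + k)); [lra|].
    replace (c / (INR n + k) * (INR n + k)) with c by (field; lra). nra.
Qed.
Lemma frac_strict c n k : 0 < c -> 1 < k -> 0 < c / (INR n + k) < c.
Proof.
  intros Hc Hk. pose proof (pos_INR n). split.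
  - unfold Rdiv. apply Rmult_lt_0_compat; [lra|]. apply Rinv_0_lt_compat; lra.
  - apply (Rmult_lt_reg_r (INR n + k)); [lra|].
    replace (c / (INR n + k) * (INR n + k)) with c by (field; lra). nra.
Qed.

Lemma bcv_fst (s : nat -> R) (a q : R) : Un_cv s a -> bcv (fun n => (s n, q)) (a, q).
Proof. intros H. split; simpl; [exact H | apply cv_const]. Qed.

Lemma rc_ivt Rp q' lo y : rc Rp -> 0 < q' <= 1 -> 0 <= lo <= tR Rp -> bbox Rp y ->
  rel Rp (lo, q') y -> rel Rp y (tR Rp, q') ->
  exists s, lo <= s <= tR Rp /\ I Rp (s, q') y.
Proof.
  intros H Hq Hlo Hy H1 H2.
  set (A := fun s => lo <= s <= tR Rp /\ rel Rp (s, q') y).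
  assert (Hb : bound A). { exists (tR Rp). intros s [hs _]. lra. }
  assert (Hne : exists s, A s). { exists lo. split; auto. lra. }
  destruct (completeness A Hb Hne) as [W [HW1 HW2]].
  assert (HloW : lo <= W). { apply HW1. split; auto; lra. }
  assert (HWT : W <= tR Rp). { apply HW2. intros s [hs _]. lra. }
  assert (Hdown : forall s, lo <= s < W -> A s).
  { intros s Hs. destruct (classic (exists a, A a /\ s < a)) as [[a [[ha1 ha2] ha3]]|Hn].
    - split; [lra|]. apply rc_trans with (a, q'); auto; try bb. apply rc_W; auto; lra.
    - exfalso. assert (W <= s). { apply HW2. intros a Ha. destruct (Rle_or_lt a s); auto.
        exfalso; apply Hn; exists a; auto. } lra. }
  set (sn := fun n => W + - (W - lo) / (INR n + 1)).
  assert (HsA : forall n, A (sn n)).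
  { intros n. pose proof (frac_bounds (W - lo) n 1 ltac:(lra) ltac:(lra)).
    destruct (Req_dec W lo) as [e|ne].
    - unfold sn. rewrite e. replace (lo + - (lo - lo) / (INR n + 1)) with lo by (field; pose proof (pos_INR n); lra).
      split; auto; lra.
    - apply Hdown. unfold sn. split. lra.
      pose proof (frac_strict (W - lo) n 1 ltac:(lra)). unfold Rdiv in *. 
      assert (0 < (W - lo) * / (INR n + 1)).
      { apply Rmult_lt_0_compat. lra. apply Rinv_0_lt_compat. pose proof (pos_INR n); lra. }
      lra. }
  assert (L1 : rel Rp (W, q') y).
  { apply (rc_cont1 Rp y (fun n => (sn n, q')) (W, q')); auto.
    - intros n. destruct (HsA n) as [h _]. bb.
    - bb.
    - apply bcv_fst. apply cv_lin; lra.
    - intros n. apply (HsA n). }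
  assert (L2 : rel Rp y (W, q')).
  { destruct (Req_dec W (tR Rp)) as [e|ne].
    - rewrite e; auto.
    - set (rn := fun n => W + (tR Rp - W) / (INR n + 2)).
      assert (Hr : forall n, W < rn n < tR Rp).
      { intros n. pose proof (frac_strict (tR Rp - W) n 2 ltac:(lra) ltac:(lra)). unfold rn; lra. }
      apply (rc_cont2 Rp y (fun n => (rn n, q')) (W, q')); auto.
      + intros n. specialize (Hr n). bb.
      + bb.
      + apply bcv_fst. apply cv_lin; lra.
      + intros n. specialize (Hr n). apply notP; auto. bb. intros [h _].
        assert (rn n <= W). { apply HW1. split; auto. lra. } lra. }
  exists W. split; [lra|]. split; auto.
Qed.


Lemma phi_exists Rp q q' w : rc Rp -> 0 <= q -> q <= q' -> 0 < q' <= 1 -> 0 <= w <= tR Rp ->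
  exists v, w <= v <= tR Rp /\ I Rp (v, q') (w, q).
Proof.
  intros H Hq Hqq Hq' Hw.
  apply rc_ivt; auto; try bb.
  - apply rc_W; auto; lra.
  - apply rc_trans with (tR Rp, q); auto; try bb.
    + apply rc_W; auto; lra.
    + apply rc_trans with (0, 0); auto; try (bb || (pose proof (rc_pos Rp H); bb)).
      * apply (rc_ZT Rp q H); lra.
      * apply (rc_ZT Rp q' H); lra.
Qed.

Lemma phi_mono Rp q q' u v u' v' : rc Rp -> 0 <= q <= 1 -> 0 < q' <= 1 ->
  0 <= u <= tR Rp -> 0 <= v <= tR Rp -> 0 <= u' <= tR Rp -> 0 <= v' <= tR Rp ->
  I Rp (v, q') (u, q) -> I Rp (v', q') (u', q) -> u <= u' -> v <= v'.
Proof.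
  intros H Hq Hq' Hu Hv Hu' Hv' [a1 a2] [b1 b2] Huu.
  destruct (Rle_or_lt v v') as [h|h]; auto. exfalso.
  assert (Hp : P Rp (v', q') (v, q')) by (apply rc_money; auto; lra).
  apply (P_notR _ _ _ Hp).
  apply rc_trans with (u, q); auto; try bb.
  apply rc_trans with (u', q); auto; try bb.
  apply rc_W; auto; lra.
Qed.

Lemma lub_seq (A : R -> Prop) W : is_lub A W -> (exists x, A x) ->
  exists s : nat -> R, forall n, A (s n) /\ W - / (INR n + 1) < s n <= W.
Proof.
  intros [H1 H2] Hne.
  assert (Hex : forall n, exists x, A x /\ W - / (INR n + 1) < x <= W).
  { intros n. assert (Hp : 0 < / (INR n + 1)) by (apply Rinv_0_lt_compat; pose proof (pos_INR n); lra).
    destruct (classic (exists x, A x /\ W - / (INR n + 1) < x)) as [[x [hx hx']]|hn].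
    - exists x. split; [auto|split; [auto|apply H1; auto]].
    - exfalso. assert (W <= W - / (INR n + 1)); [|lra].
      apply H2. intros x hx. destruct (Rle_or_lt x (W - / (INR n + 1))); auto.
      exfalso; apply hn; exists x; auto. }
  exists (fun n => proj1_sig (constructive_indefinite_description _ (Hex n))).
  intros n. exact (proj2_sig (constructive_indefinite_description _ (Hex n))).
Qed.

Lemma squeeze_cv (s : nat -> R) a : (forall n, a - / (INR n + 1) < s n <= a) -> Un_cv s a.
Proof.
  intros Hs eps He. destruct (cv_lin a (-1) 1 ltac:(lra) eps He) as [N HN].
  exists N. intros n Hn. specialize (HN n Hn). specialize (Hs n). unfold Rdist in *.
  replace (a + -1 / (INR n + 1) - a) with (- / (INR n + 1)) in HN by (field; pose proof (pos_INR n); lra).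
  rewrite Rabs_Ropp in HN. rewrite Rabs_right in HN by (left; apply Rinv_0_lt_compat; pose proof (pos_INR n); lra).
  rewrite Rabs_left1 by lra. lra.
Qed.


Lemma sc_core R1 R2 q q' u v : rc R1 -> rc R2 -> single_crossing R1 R2 -> tR R1 < tR R2 ->
  0 < q -> q < q' -> q' <= 1 -> 0 <= u < tR R1 -> 0 <= v <= tR R1 ->
  I R1 (v, q') (u, q) -> P R2 (v, q') (u, q).
Proof.
  intros H1 H2 Hsc Ht Hq Hqq Hq' Hu Hv HI.
  pose proof (rc_pos R1 H1) as Hp1.
  apply NNPP. intro Hn.
  assert (Hbad0 : rel R2 (u, q) (v, q')) by (apply notP; auto; bb).
  set (bad := fun w => exists vw, 0 <= vw <= tR R1 /\ I R1 (vw, q') (w, q) /\ rel R2 (w, q) (vw, q')).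
  set (S := fun w => u <= w < tR R1 /\ bad w).
  assert (Hb : bound S). { exists (tR R1). intros s [hs _]. lra. }
  assert (Hne : exists s, S s). { exists u. split; [lra|]. exists v. auto. }
  destruct (completeness S Hb Hne) as [U HU].
  assert (HuU : u <= U). { apply (proj1 HU). split; [lra|]. exists v; auto. }
  assert (HUT : U <= tR R1). { apply (proj2 HU). intros s [hs _]. lra. }
  destruct (lub_seq S U HU Hne) as [s Hs].
  destruct (phi_exists R1 q q' U H1) as [V [HV1 HV2]]; try lra.
  assert (HsV : forall n, rel R2 (s n, q) (V, q')).
  { intros n. destruct (Hs n) as [[hs1 [vn [hv1 [hv2 hv3]]]] hs2].
    assert (vn <= V). { apply (phi_mono R1 q q' (s n) vn U V); auto; lra. }
    apply rc_trans with (vn, q'); auto; try bb. apply rc_W; auto; lra. }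
  assert (HUV : rel R2 (U, q) (V, q')).
  { apply (rc_cont1 R2 (V, q') (fun n => (s n, q)) (U, q)); auto; try bb.
    - intros n. destruct (Hs n) as [[hs1 _] hs2]. bb.
    - apply bcv_fst. apply squeeze_cv. intros n; apply (Hs n). }
  destruct (Req_dec U (tR R1)) as [e|ne].
  - assert (Hp : P R2 (tR R1, q') (tR R1, q)) by (apply rc_qual; auto; lra).
    apply (P_notR _ _ _ Hp). rewrite <- e.
    apply rc_trans with (V, q'); auto; try bb. apply rc_W; auto; lra.
  - set (rn := fun n => U + (tR R1 - U) / (INR n + 2)).
    assert (Hr : forall n, U < rn n < tR R1).
    { intros n. pose proof (frac_strict (tR R1 - U) n 2 ltac:(lra) ltac:(lra)). unfold rn; lra. }
    assert (HVr : forall n, rel R2 (V, q') (rn n, q)).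
    { intros n. specialize (Hr n).
      destruct (phi_exists R1 q q' (rn n) H1) as [vn [hv1 hv2]]; try lra.
      assert (hnb : ~ bad (rn n)).
      { intros hb. assert (rn n <= U). { apply (proj1 HU). split; auto. lra. } lra. }
      assert (hr : rel R2 (vn, q') (rn n, q)).
      { apply notP; auto; try bb. intros [hh _]. apply hnb. exists vn. split; [lra|]. auto. }
      assert (V <= vn). { apply (phi_mono R1 q q' U V (rn n) vn); auto; lra. }
      apply rc_trans with (vn, q'); auto; try bb. apply rc_W; auto; lra. }
    assert (HVU : rel R2 (V, q') (U, q)).
    { apply (rc_cont2 R2 (V, q') (fun n => (rn n, q)) (U, q)); auto; try bb.
      - intros n. specialize (Hr n). bb.
      - apply bcv_fst. apply cv_lin; lra. }
    destruct Hsc as [_ Hsc].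
    assert (He : (V, q') = (U, q)).
    { apply (Hsc U q); try lra; try bb.
      - apply Rmin_glb_lt; lra.
      - split; auto. apply HV2. apply HV2.
      - split; auto. }
    inversion He. lra.
Qed.


Lemma sc_gen R1 R2 tx qx tw qw : rc R1 -> rc R2 -> single_crossing R1 R2 -> tR R1 < tR R2 ->
  0 <= tx -> 0 <= qx -> tx < tw -> qx < qw -> tw <= tR R1 -> qw <= 1 ->
  rel R1 (tw, qw) (tx, qx) -> P R2 (tw, qw) (tx, qx).
Proof.
  intros H1 H2 Hsc Ht Htx Hqx Htt Hqq Htw Hqw Hr.
  pose proof (rc_pos R1 H1). pose proof (rc_pos R2 H2).
  destruct (Req_dec qx 0) as [e|ne].
  - subst. apply PR_trans with (0, 0); auto; try bb.
    + apply rc_NZ; auto; lra.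
    + apply (rc_Z0 R2 tx H2); lra.
  - destruct (phi_exists R1 qx qw tx H1) as [s [Hs1 Hs2]]; try lra.
    assert (Hts : tw <= s).
    { destruct (Rle_or_lt tw s) as [h|h]; auto. exfalso.
      assert (Hp : P R1 (s, qw) (tw, qw)) by (apply rc_money; auto; lra).
      apply (P_notR _ _ _ Hp). apply rc_trans with (tx, qx); auto; try bb. apply Hs2. }
    assert (Hc : P R2 (s, qw) (tx, qx)).
    { apply (sc_core R1 R2 qx qw tx s); auto; lra. }
    apply RP_trans with (s, qw); auto; try bb. apply rc_W; auto; lra.
Qed.

Lemma D_rc D Rp : rich_single_crossing D -> D Rp -> rc Rp.
Proof. intros [h _] hp. apply h; auto. Qed.

Lemma D_sc D R1 R2 : rich_single_crossing D -> D R1 -> D R2 -> tR R1 <> tR R2 -> single_crossing R1 R2.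
Proof. intros [_ [h _]] h1 h2 hne. apply h; auto. intro e; subst; auto. Qed.

Lemma D_inj D R1 R2 : rich_single_crossing D -> D R1 -> D R2 -> tR R1 = tR R2 -> R1 = R2.
Proof.
  intros Hd h1 h2 e. apply NNPP. intro hne. destruct Hd as [_ [h _]].
  destruct (h R1 R2 h1 h2 hne) as [hh _]. auto.
Qed.

Lemma D_surj D t : rich_single_crossing D -> 0 < t -> exists Rp, D Rp /\ tR Rp = t.
Proof.
  intros Hd Ht. pose proof Hd as [_ [_ Hr]].
  destruct (Hr (0, 0) (t, 1)) as [Rp [HD [Hb1 [Hb2 HI]]]].
  - unfold inZ; simpl; lra.
  - unfold inZ; simpl; lra.
  - unfold blt; simpl; lra.
  - exists Rp. split; auto. pose proof (D_rc D Rp Hd HD) as H.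
    unfold bbox, in_box in Hb2; simpl in Hb2.
    destruct (Req_dec t (tR Rp)) as [e|ne]; auto. exfalso.
    assert (Hp : P Rp (t, 1) (0, 0)) by (apply rc_NZ; auto; lra).
    apply (P_notR _ _ _ Hp). apply HI.
Qed.

Lemma cr_lo D Rs Rr x w : rich_single_crossing D -> D Rs -> D Rr -> blt x w ->
  bbox Rs x -> bbox Rs w -> I Rs x w -> bbox Rr w -> tR Rr < tR Rs -> P Rr x w.
Proof.
  intros Hd Hs Hr Hlt Hbx Hbw HI Hbr Ht.
  destruct x as [tx qx]; destruct w as [tw qw]. unfold blt in Hlt; simpl in Hlt.
  pose proof (D_rc D Rs Hd Hs) as Hs'. pose proof (D_rc D Rr Hd Hr) as Hr'.
  apply NNPP. intro hn.
  assert (h : rel Rr (tw, qw) (tx, qx)) by (apply notP; auto; bb).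
  assert (hp : P Rs (tw, qw) (tx, qx)).
  { apply (sc_gen Rr Rs); auto; try bb. apply (D_sc D); auto; lra. }
  apply (P_notR _ _ _ hp). apply HI.
Qed.

Lemma cr_hi D Rs Rr x w : rich_single_crossing D -> D Rs -> D Rr -> blt x w ->
  bbox Rs x -> bbox Rs w -> I Rs x w -> tR Rs < tR Rr -> P Rr w x.
Proof.
  intros Hd Hs Hr Hlt Hbx Hbw HI Ht.
  destruct x as [tx qx]; destruct w as [tw qw]. unfold blt in Hlt; simpl in Hlt.
  pose proof (D_rc D Rs Hd Hs) as Hs'. pose proof (D_rc D Rr Hd Hr) as Hr'.
  apply (sc_gen Rs Rr); auto; try bb. apply (D_sc D); auto; lra. apply HI.
Qed.


Lemma ble_refl x : ble x x.
Proof. left; reflexivity. Qed.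
Lemma ble_trans x y z : ble x y -> ble y z -> ble x z.
Proof.
  intros [e|h1] [e'|h2]; subst; unfold ble; auto. right. unfold blt in *. lra.
Qed.
Lemma ble_antisym x y : ble x y -> ble y x -> x = y.
Proof. intros [e|h1] [e'|h2]; auto. unfold blt in *; lra. Qed.
Lemma ble_blt x y : ble x y -> x <> y -> blt x y.
Proof. intros [e|h] hn; auto. contradiction. Qed.

Lemma chain {A : Type} (r : A -> A -> Prop) (a : nat -> A) :
  (forall x y z, r x y -> r y z -> r x z) -> (forall x, r x x) ->
  (forall n, r (a n) (a (S n))) -> forall i j, (i <= j)%nat -> r (a i) (a j).
Proof.
  intros Ht Hr Hm i j Hij. induction Hij; auto. apply Ht with (a m); auto.
Qed.

Lemma ev_const {A : Type} (r : A -> A -> Prop) (l : list A) :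
  (forall x y z, r x y -> r y z -> r x z) -> (forall x y, r x y -> r y x -> x = y) ->
  (forall x, r x x) ->
  forall a : nat -> A, (forall n, r (a n) (a (S n))) -> (forall n, In (a n) l) ->
  exists N, forall n, (N <= n)%nat -> a n = a N.
Proof.
  intros Ht Has Hr. induction l as [|b l IH]; intros a Hm Hin.
  - destruct (Hin 0%nat).
  - destruct (classic (exists n0, forall n, (n0 <= n)%nat -> a n <> b)) as [[n0 Hn0]|Hn].
    + destruct (IH (fun k => a (n0 + k)%nat)) as [N' HN'].
      * intros n. replace (n0 + S n)%nat with (S (n0 + n)) by lia. apply Hm.
      * intros n. destruct (Hin (n0 + n)%nat) as [e|h]; auto.
        exfalso; apply (Hn0 (n0 + n)%nat); auto; lia.
      * exists (n0 + N')%nat. intros n Hnn.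
        replace n with (n0 + (n - n0))%nat by lia. apply HN'. lia.
    + assert (Hinf : forall n0, exists n, (n0 <= n)%nat /\ a n = b).
      { intros n0. apply NNPP. intro h. apply Hn. exists n0. intros n hn e. apply h. exists n; auto. }
      destruct (Hinf 0%nat) as [m0 [_ Hm0]].
      exists m0. intros n Hnn. rewrite Hm0.
      destruct (Hinf n) as [n' [Hn' Hb]].
      apply Has.
      * rewrite <- Hb. apply (chain r a Ht Hr Hm); auto.
      * rewrite <- Hm0. apply (chain r a Ht Hr Hm); auto.
Qed.

Lemma ev_bcv (a : nat -> bundle) N : (forall n, (N <= n)%nat -> a n = a N) -> bcv a (a N).
Proof.
  intros H. split; intros eps He; exists N; intros n Hn; rewrite (H n Hn); unfold Rdist;
  rewrite Rminus_diag, Rabs_R0; lra.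
Qed.

Lemma box_sub Rp Rq x : bbox Rq x -> tR Rq <= tR Rp -> bbox Rp x.
Proof. destruct x; intros; bb. Qed.
Lemma box_fst Rp Rq x : bbox Rq x -> fst x <= tR Rp -> bbox Rp x.
Proof. destruct x; intros; bb. Qed.
Lemma box_inZ Rp x : bbox Rp x -> inZ x.
Proof. destruct x; unfold inZ; intros; bb. Qed.
Lemma box_fst_le Rp x : bbox Rp x -> fst x <= tR Rp.
Proof. destruct x; intros; bb. Qed.
Lemma blt_box Rp x w : blt x w -> bbox Rp w -> inZ x -> bbox Rp x.
Proof. destruct x, w; unfold blt, inZ; intros; bb. Qed.

Definition dom D Rlo Rhi := interval D Rlo Rhi.

Lemma F_evconst D Rlo Rhi F (Rs : nat -> pref) :
  rich_single_crossing D -> finite_range (interval D Rlo Rhi) F ->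
  monotone_mech (interval D Rlo Rhi) F -> (forall n, interval D Rlo Rhi (Rs n)) -> monotone_seq Rs ->
  exists N, forall n, (N <= n)%nat -> F (Rs n) = F (Rs N).
Proof.
  intros Hd [l Hl] Hm Hs [Hinc|Hdec].
  - apply (ev_const ble l ble_trans ble_antisym ble_refl (fun n => F (Rs n))).
    + intros n. destruct (Hinc n) as [h|e].
      * apply Hm; auto.
      * rewrite (D_inj D (Rs n) (Rs (S n))); auto. apply ble_refl. apply Hs. apply Hs.
    + intros n; apply Hl; auto.
  - apply (ev_const (fun x y => ble y x) l).
    + intros x y z h1 h2. eapply ble_trans; eauto.
    + intros x y h1 h2. apply ble_antisym; auto.
    + intros; apply ble_refl.
    + intros n. destruct (Hdec n) as [h|e].
      * apply Hm; auto.
      * rewrite (D_inj D (Rs n) (Rs (S n))); auto. apply ble_refl. apply Hs. apply Hs.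
    + intros n; apply Hl; auto.
Qed.


Lemma SP_mono D Rlo Rhi F :
  rich_single_crossing D -> is_mechanism (interval D Rlo Rhi) F ->
  (forall Rp, interval D Rlo Rhi Rp -> I Rp (F Rp) (0, 0) -> F Rp = (0, 0)) ->
  restricted_SP (interval D Rlo Rhi) F -> monotone_mech (interval D Rlo Rhi) F.
Proof.
  intros Hd Hm Hz Hsp R1 R2 h1 h2 hlt. unfold prec in hlt.
  pose proof (D_rc D R1 Hd (proj1 h1)) as H1. pose proof (D_rc D R2 Hd (proj1 h2)) as H2.
  pose proof (rc_pos R1 H1).
  pose proof (Hm R1 h1) as B1. pose proof (Hm R2 h2) as B2.
  pose proof (Hsp R1 R2 h1 h2) as S12. pose proof (Hsp R2 R1 h2 h1) as S21.
  pose proof (Hz R1 h1) as Z1. pose proof (Hz R2 h2) as Z2.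
  destruct (F R1) as [t1 q1]; destruct (F R2) as [t2 q2].
  unfold bbox, in_box in B1, B2; simpl in B1, B2.
  assert (S21' : rel R2 (t2, q2) (t1, q1)) by (apply S21; bb).
  destruct (Rlt_or_le t1 t2) as [Ht|Ht]; destruct (Rlt_or_le q1 q2) as [Hq|Hq].
  - right. unfold blt; simpl; lra.
  -
    destruct (classic ((t1, q1) = (t2, q2))) as [e|ne]; [left; auto|].
    destruct (Req_dec q1 0) as [e|nq].
    + exfalso. assert (q2 = 0) by lra. subst.
      assert (E2 : (t2, 0) = (0, 0)). { apply Z2. apply (rc_Z0 R2 t2 H2); lra. }
      inversion E2. subst. apply ne. f_equal. lra.
    + exfalso. assert (hp : P R2 (t1, q1) (t2, q2)) by (apply rc_dstrict; auto; lra).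
      exact (P_notR _ _ _ hp S21').
  - destruct (classic ((t1, q1) = (t2, q2))) as [e|ne]; [left; auto|].
    exfalso.
    assert (S12' : rel R1 (t1, q1) (t2, q2)) by (apply S12; bb).
    destruct (Req_dec q2 0) as [e|nq].
    + lra.
    + destruct (Req_dec t2 (tR R1)) as [e|nt].
      * assert (E1 : (t1, q1) = (0, 0)).
        { apply Z1. replace t1 with (tR R1) by lra. apply (rc_ZT R1 q1 H1); lra. }
        inversion E1. lra.
      * assert (hp : P R1 (t2, q2) (t1, q1)) by (apply rc_dstrict; auto; lra).
        exact (P_notR _ _ _ hp S12').
  - destruct (classic ((t1, q1) = (t2, q2))) as [e|ne]; [left; auto|].
    exfalso.
    assert (S12' : rel R1 (t1, q1) (t2, q2)) by (apply S12; bb).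
    destruct (Req_dec t1 t2) as [et|nt].
    + subst t2. destruct (Req_dec q1 0) as [e|nq].
      * assert (q2 = 0) by lra. subst. apply ne; reflexivity.
      * assert (hp : P R2 (t1, q1) (t1, q2)).
        { apply rc_dstrict; auto; try lra. }
        exact (P_notR _ _ _ hp S21').
    + destruct (Req_dec q1 q2) as [eq|nq].
      * subst q2. destruct (Req_dec q1 0) as [e|nq0].
        -- subst. assert (E1 : (t1, 0) = (0, 0)). { apply Z1. apply (rc_Z0 R1 t1 H1); lra. }
           inversion E1. lra.
        -- destruct (Req_dec t2 (tR R1)) as [e|nt2]; [lra|].
           assert (hp : P R1 (t2, q1) (t1, q1)) by (apply rc_money; auto; lra).
           exact (P_notR _ _ _ hp S12').
      * destruct (Req_dec q2 0) as [e|nq2].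
        -- subst. assert (E2 : (t2, 0) = (0, 0)). { apply Z2. apply (rc_Z0 R2 t2 H2); lra. }
           inversion E2. subst.
           assert (hp : P R2 (t1, q1) (0, 0)) by (apply rc_NZ; auto; lra).
           exact (P_notR _ _ _ hp S21').
        -- assert (hp : P R2 (t1, q1) (t2, q2)).
           { apply (sc_gen R1 R2); auto; try lra. apply (D_sc D); auto; try apply h1; try apply h2; lra. }
           exact (P_notR _ _ _ hp S21').
Qed.


Lemma SP_VF D Rlo Rhi F :
  rich_single_crossing D -> is_mechanism (interval D Rlo Rhi) F ->
  finite_range (interval D Rlo Rhi) F ->
  (forall Rp, interval D Rlo Rhi Rp -> I Rp (F Rp) (0, 0) -> F Rp = (0, 0)) ->
  restricted_SP (interval D Rlo Rhi) F -> VF_continuous D (interval D Rlo Rhi) F.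
Proof.
  intros Hd Hm Hfin Hz Hsp.
  pose proof (SP_mono D Rlo Rhi F Hd Hm Hz Hsp) as Hmono.
  intros Rp Rs hp hs hmon [cv1 cv2].
  destruct (F_evconst D Rlo Rhi F Rs Hd Hfin Hmono hs hmon) as [N HN].
  set (c := F (Rs N)).
  set (y := F Rp).
  pose proof (D_rc D Rp Hd (proj1 hp)) as Hp.
  assert (Hgoal : bbox Rp c /\ I Rp c y).
  { destruct (classic (exists n, (N <= n)%nat /\ tR (Rs n) = tR Rp)) as [[n [hn he]]|hne1].
    - assert (e : Rs n = Rp) by (apply (D_inj D); auto; [apply hs|apply hp]).
      unfold c, y. rewrite <- (HN n hn), e. split; [apply Hm; auto|]. split; apply rc_refl; auto.
    - destruct (classic (exists n, (N <= n)%nat /\ tR (Rs n) < tR Rp)) as [[n [hn hl]]|hne2].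
      + assert (Ec : F (Rs n) = c) by (apply HN; auto).
        pose proof (Hm (Rs n) (hs n)) as Bn. rewrite Ec in Bn.
        assert (Bc : bbox Rp c) by (apply (box_sub Rp (Rs n)); auto; lra).
        assert (Hble : ble c y) by (rewrite <- Ec; apply Hmono; auto).
        assert (Hyc : rel Rp y c) by (apply Hsp; auto).
        split; auto. split; auto.
        apply NNPP. intro hn1.
        destruct (classic (c = y)) as [e|ne].
        { apply hn1. rewrite e. apply rc_refl; auto. }
        assert (Hlt : blt c y) by (apply ble_blt; auto).
        pose proof (Hm Rp hp) as By.
        destruct (proj2 (proj2 Hd) c y (box_inZ _ _ Bc) (box_inZ _ _ By) Hlt) as [Rst [HDs [Bsc [Bsy HIs]]]].
        destruct (Rtotal_order (tR Rp) (tR Rst)) as [h|[h|h]].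
        * assert (hp' : P Rp c y) by (apply (cr_lo D Rst Rp); auto; apply hp).
          apply hn1. apply P_R; auto.
        * assert (e : Rp = Rst) by (apply (D_inj D); auto; apply hp). subst Rst. apply hn1. apply HIs.
        * destruct (cv2 Rst HDs h) as [M HM].
          set (m := Nat.max N M).
          assert (hm : prec Rst (Rs m)) by (apply HM; unfold m; lia).
          assert (Ecm : F (Rs m) = c) by (apply HN; unfold m; lia).
          assert (hpp : P (Rs m) y c) by (apply (cr_hi D Rst (Rs m)); auto; apply hs).
          apply (P_notR _ _ _ hpp). rewrite <- Ecm. apply Hsp; auto.
          apply (box_sub _ Rst); auto. unfold prec in hm. lra.
      + assert (hgt : forall n, (N <= n)%nat -> tR Rp < tR (Rs n)).
        { intros n hn. destruct (Rtotal_order (tR Rp) (tR (Rs n))) as [h|[h|h]]; auto;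
          exfalso; [apply hne1|apply hne2]; exists n; auto. }
        pose proof (Hm (Rs N) (hs N)) as BN. fold c in BN.
        assert (Hfc : fst c <= tR Rp).
        { destruct (Rle_or_lt (fst c) (tR Rp)) as [h|h]; auto. exfalso.
          assert (hpos : 0 < (tR Rp + fst c) / 2) by (pose proof (rc_pos Rp Hp); lra).
          destruct (D_surj D _ Hd hpos) as [a [Ha Hta]].
          destruct (cv1 a Ha) as [M HM]. { unfold prec; lra. }
          set (m := Nat.max N M).
          assert (hm : prec (Rs m) a) by (apply HM; unfold m; lia).
          assert (Ecm : F (Rs m) = c) by (apply HN; unfold m; lia).
          pose proof (Hm (Rs m) (hs m)) as Bm. rewrite Ecm in Bm.
          pose proof (box_fst_le _ _ Bm). unfold prec in hm. lra. }
        assert (Bc : bbox Rp c) by (apply (box_fst Rp (Rs N)); auto).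
        assert (Hble : ble y c) by (apply Hmono; auto; apply hgt; lia).
        assert (Hyc : rel Rp y c) by (apply Hsp; auto).
        split; auto. split; auto.
        apply NNPP. intro hn1.
        destruct (classic (y = c)) as [e|ne].
        { apply hn1. rewrite e. apply rc_refl; auto. }
        assert (Hlt : blt y c) by (apply ble_blt; auto).
        pose proof (Hm Rp hp) as By.
        destruct (proj2 (proj2 Hd) y c (box_inZ _ _ By) (box_inZ _ _ Bc) Hlt) as [Rst [HDs [Bsy [Bsc HIs]]]].
        destruct (Rtotal_order (tR Rp) (tR Rst)) as [h|[h|h]].
        * destruct (cv1 Rst HDs h) as [M HM].
          set (m := Nat.max N M).
          assert (hm : prec (Rs m) Rst) by (apply HM; unfold m; lia).
          assert (Ecm : F (Rs m) = c) by (apply HN; unfold m; lia).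
          pose proof (Hm (Rs m) (hs m)) as Bm. rewrite Ecm in Bm.
          assert (hpp : P (Rs m) y c) by (apply (cr_lo D Rst (Rs m)); auto; apply hs).
          apply (P_notR _ _ _ hpp). rewrite <- Ecm. apply Hsp; auto.
          apply (box_sub _ Rp); auto. left. apply hgt. unfold m; lia.
        * assert (e : Rp = Rst) by (apply (D_inj D); auto; apply hp). subst Rst. apply hn1. apply HIs.
        * assert (hp' : P Rp c y) by (apply (cr_hi D Rst Rp); auto; apply hp).
          apply hn1. apply P_R; auto. }
  exists c. destruct Hgoal as [Hb HI]. split; [|split; [apply box_fst_le; auto|split; auto]].
  apply (ev_bcv (fun n => F (Rs n)) N). auto.
Qed.


Lemma surj_fun D : rich_single_crossing D ->
  exists pk : R -> pref, forall t, 0 < t -> D (pk t) /\ tR (pk t) = t.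
Proof.
  intros Hd.
  assert (H : forall t, exists Q, 0 < t -> D Q /\ tR Q = t).
  { intros t. destruct (Rlt_or_le 0 t) as [h|h].
    - destruct (D_surj D t Hd h) as [Q HQ]. exists Q; auto.
    - exists (Pref 0 (fun _ _ => True)). intros; lra. }
  exists (fun t => proj1_sig (constructive_indefinite_description _ (H t))).
  intros t. exact (proj2_sig (constructive_indefinite_description _ (H t))).
Qed.

Fixpoint runmax (s : nat -> R) (n : nat) : R :=
  match n with O => s O | S k => Rmax (runmax s k) (s (S k)) end.

Lemma runmax_prop (A : R -> Prop) (s : nat -> R) W :
  (forall n, A (s n) /\ W - / (INR n + 1) < s n <= W) ->
  (forall n, A (runmax s n)) /\ (forall n, runmax s n <= runmax s (S n)) /\ Un_cv (runmax s) W.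
Proof.
  intros Hs.
  assert (H1 : forall n, A (runmax s n) /\ s n <= runmax s n <= W).
  { induction n as [|n IH]; simpl.
    - pose proof (Hs O). split; [apply H|lra].
    - destruct IH as [ha hb]. pose proof (Hs (S n)) as [hc hd].
      unfold Rmax. destruct (Rle_dec (runmax s n) (s (S n))); split; auto; lra. }
  split; [intros n; apply H1|split].
  - intros n. simpl. apply Rmax_l.
  - apply squeeze_cv. intros n. pose proof (H1 n). pose proof (Hs n). lra.
Qed.

Lemma frac_decr c n k : 0 <= c -> 1 <= k -> c / (INR (S n) + k) <= c / (INR n + k).
Proof.
  intros Hc Hk. rewrite S_INR. pose proof (pos_INR n).
  unfold Rdiv. apply Rmult_le_compat_l; auto.
  apply Rinv_le_contravar; lra.
Qed.

Lemma cv_order D (Rs : nat -> pref) Q : Un_cv (fun n => tR (Rs n)) (tR Q) -> order_cv D Rs Q.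
Proof.
  intros Hc. split.
  - intros b _ hb. unfold prec in *. destruct (Hc (tR b - tR Q)) as [N HN]; [lra|].
    exists N. intros n hn. specialize (HN n hn). unfold Rdist in HN.
    pose proof (Rle_abs (tR (Rs n) - tR Q)). lra.
  - intros a _ ha. unfold prec in *. destruct (Hc (tR Q - tR a)) as [N HN]; [lra|].
    exists N. intros n hn. specialize (HN n hn). unfold Rdist in HN.
    pose proof (Rle_abs (- (tR (Rs n) - tR Q))). rewrite Rabs_Ropp in *. lra.
Qed.

Lemma vf_apply D Rlo Rhi F Q (Rs : nat -> pref) :
  rich_single_crossing D -> finite_range (interval D Rlo Rhi) F ->
  monotone_mech (interval D Rlo Rhi) F -> VF_continuous D (interval D Rlo Rhi) F ->
  interval D Rlo Rhi Q -> (forall n, interval D Rlo Rhi (Rs n)) -> monotone_seq Rs ->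
  Un_cv (fun n => tR (Rs n)) (tR Q) ->
  exists N, (forall n, (N <= n)%nat -> F (Rs n) = F (Rs N)) /\
    bbox Q (F (Rs N)) /\ I Q (F (Rs N)) (F Q).
Proof.
  intros Hd Hfin Hmono Hvf hq hs hmon hcv.
  destruct (F_evconst D Rlo Rhi F Rs Hd Hfin Hmono hs hmon) as [N HN].
  destruct (Hvf Q Rs hq hs hmon (cv_order D Rs Q hcv)) as [z [hz1 [_ [hz2 hz3]]]].
  pose proof (ev_bcv (fun n => F (Rs n)) N HN) as hc.
  assert (e : z = F (Rs N)).
  { destruct hz1 as [a1 a2]. destruct hc as [b1 b2].
    pose proof (UL_sequence _ _ _ a1 b1). pose proof (UL_sequence _ _ _ a2 b2).
    destruct z; destruct (F (Rs N)); simpl in *; subst; auto. }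
  exists N. subst z. auto.
Qed.


Lemma Un_cv_ext' (u v : nat -> R) l : (forall n, u n = v n) -> Un_cv u l -> Un_cv v l.
Proof. intros He Hc eps h. destruct (Hc eps h) as [N HN]. exists N. intros n hn. rewrite <- He. auto. Qed.

Lemma half1 D Rlo Rhi F R0 :
  rich_single_crossing D -> is_mechanism (interval D Rlo Rhi) F ->
  finite_range (interval D Rlo Rhi) F ->
  monotone_mech (interval D Rlo Rhi) F -> VF_continuous D (interval D Rlo Rhi) F ->
  interval D Rlo Rhi R0 ->
  forall Q, interval D Rlo Rhi Q -> tR Q <= tR R0 -> ~ P R0 (F Q) (F R0).
Proof.
  intros Hd Hm Hfin Hmono Hvf h0 Q0 hq0 hle hP0.
  destruct (surj_fun D Hd) as [pk Hpk].
  pose proof (D_rc D R0 Hd (proj1 h0)) as H0.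
  set (B := fun Q => interval D Rlo Rhi Q /\ tR Q <= tR R0 /\ P R0 (F Q) (F R0)).
  set (A := fun t => exists Q, B Q /\ tR Q = t).
  assert (Hb : bound A). { exists (tR R0). intros t [Q [[_ [h _]] e]]. lra. }
  assert (Hne : exists t, A t). { exists (tR Q0). exists Q0. split; auto. split; auto. }
  destruct (completeness A Hb Hne) as [sg Hsg].
  assert (hs1 : tR Q0 <= sg). { apply (proj1 Hsg). exists Q0; split; auto. split; auto. }
  assert (hs2 : sg <= tR R0). { apply (proj2 Hsg). intros t [Q [[_ [h _]] e]]. lra. }
  pose proof (rc_pos Q0 (D_rc D Q0 Hd (proj1 hq0))) as hq0p.
  assert (pkB : forall t, A t -> B (pk t)).
  { intros t [Q [hB e]]. assert (0 < tR Q) by (apply rc_pos; apply (D_rc D Q Hd); apply hB).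
    destruct (Hpk t) as [hD ht]; [lra|].
    assert (pk t = Q) by (apply (D_inj D); auto; [apply hB|lra]). rewrite H1; auto. }
  assert (dsg : forall t, tR Q0 <= t <= tR R0 -> interval D Rlo Rhi (pk t)).
  { intros t ht. destruct (Hpk t) as [hD e]; [lra|]. split; auto.
    unfold precsim. destruct hq0 as [_ [a _]]. destruct h0 as [_ [_ b]]. unfold precsim in *. lra. }
  set (Qs := pk sg).
  assert (hQs : D Qs /\ tR Qs = sg) by (apply Hpk; lra).
  assert (dQs : interval D Rlo Rhi Qs) by (apply dsg; lra).
  destruct (lub_seq A sg Hsg Hne) as [s Hs].
  destruct (runmax_prop A s sg Hs) as [rA [rM rC]].
  set (Rs := fun n => pk (runmax s n)).
  assert (BRs : forall n, B (Rs n)) by (intros n; apply pkB; auto).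
  assert (tRs : forall n, tR (Rs n) = runmax s n).
  { intros n. destruct (rA n) as [Q [hB e]]. pose proof (BRs n) as hb.
    assert (0 < tR Q) by (apply rc_pos; apply (D_rc D Q Hd); apply hB).
    apply Hpk. lra. }
  destruct (vf_apply D Rlo Rhi F Qs Rs Hd Hfin Hmono Hvf dQs) as [N [HN [Bc Ic]]].
  { intros n; apply BRs. }
  { left. intros n. unfold precsim. rewrite !tRs. apply rM. }
  { rewrite (proj2 hQs). apply (Un_cv_ext' (runmax s)); auto. }
  set (c := F (Rs N)) in *.
  assert (Pc : P R0 c (F R0)) by apply (BRs N).
  assert (Hle : ble c (F Qs)).
  { destruct (Rlt_or_le (tR (Rs N)) sg) as [h|h].
    - apply Hmono; auto. apply BRs. unfold prec. lra.
    - assert (tR (Rs N) <= sg). { rewrite tRs. destruct (rA N) as [Q [hB e]].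
        rewrite <- e. apply (proj1 Hsg). exists Q; auto. }
      assert (e : Rs N = Qs) by (apply (D_inj D); [auto|apply BRs|apply hQs|lra]).
      unfold c. rewrite e. apply ble_refl. }
  pose proof (Hm Qs dQs) as BQs. pose proof (Hm R0 h0) as B0.
  assert (BQs0 : bbox R0 (F Qs)) by (apply (box_sub _ Qs); auto; lra).
  assert (Bc0 : bbox R0 c) by (apply (box_sub _ Qs); auto; lra).
  assert (PQs : P R0 (F Qs) (F R0)).
  { destruct (classic (c = F Qs)) as [e|ne]; [rewrite <- e; auto|].
    assert (Hlt : blt c (F Qs)) by (apply ble_blt; auto).
    destruct (Req_dec sg (tR R0)) as [e|ne2].
    - exfalso. assert (Qs = R0) by (apply (D_inj D); [auto|apply hQs|apply h0|lra]).
      subst Qs. rewrite H in Ic. apply (P_notR _ _ _ Pc). apply Ic.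
    - assert (hp : P R0 (F Qs) c).
      { apply (cr_hi D Qs R0); auto; [apply hQs|apply h0|lra]. }
      apply PR_trans with c; auto. apply P_R; auto. }
  assert (hlt : sg < tR R0).
  { destruct (Req_dec sg (tR R0)) as [e|ne2]; [|lra]. exfalso.
    assert (Qs = R0) by (apply (D_inj D); [auto|apply hQs|apply h0|lra]).
    rewrite H in PQs. apply (P_irrefl _ _ PQs). }
  set (r := fun n => sg + (tR R0 - sg) / (INR n + 2)).
  assert (hr : forall n, sg < r n < tR R0).
  { intros n. pose proof (frac_strict (tR R0 - sg) n 2 ltac:(lra) ltac:(lra)). unfold r; lra. }
  set (Rs' := fun n => pk (r n)).
  assert (tRs' : forall n, tR (Rs' n) = r n) by (intros n; apply Hpk; specialize (hr n); lra).
  assert (dRs' : forall n, interval D Rlo Rhi (Rs' n)) by (intros n; apply dsg; specialize (hr n); lra).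
  assert (notB : forall n, rel R0 (F R0) (F (Rs' n))).
  { intros n. apply notP; auto.
    - apply (box_sub _ (Rs' n)); auto. rewrite tRs'. specialize (hr n); lra.
    - intros hp. assert (A (r n)). { exists (Rs' n). split; auto. split; auto. split; auto.
        rewrite tRs'. specialize (hr n); lra. }
      assert (r n <= sg) by (apply (proj1 Hsg); auto). specialize (hr n). lra. }
  destruct (vf_apply D Rlo Rhi F Qs Rs' Hd Hfin Hmono Hvf dQs) as [N' [HN' [Bc' Ic']]]; auto.
  { right. intros n. unfold precsim. rewrite !tRs'. unfold r.
    pose proof (frac_decr (tR R0 - sg) n 2 ltac:(lra) ltac:(lra)). lra. }
  { rewrite (proj2 hQs). apply (Un_cv_ext' r). intros; rewrite tRs'; auto. apply cv_lin; lra. }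
  set (c' := F (Rs' N')) in *.
  assert (Hle' : ble (F Qs) c').
  { apply Hmono; auto. unfold prec. rewrite tRs', (proj2 hQs). apply hr. }
  pose proof (notB N') as nb. fold c' in nb.
  destruct (classic (F Qs = c')) as [e|ne].
  - rewrite <- e in nb. apply (P_notR _ _ _ PQs nb).
  - assert (Hlt : blt (F Qs) c') by (apply ble_blt; auto).
    assert (hp : P R0 c' (F Qs)).
    { apply (cr_hi D Qs R0); auto; [apply hQs|apply h0| |lra]. apply I_sym; auto. }
    assert (hp2 : P R0 c' (F R0)).
    { apply PR_trans with (F Qs); auto.
      - apply (box_sub _ (Rs' N')); [apply Hm; auto|]. rewrite tRs'. specialize (hr N'); lra.
      - apply P_R; auto. }
    apply (P_notR _ _ _ hp2 nb).
Qed.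


Lemma ble_fst x y : ble x y -> fst x <= fst y.
Proof. intros [e|h]; [subst; lra|unfold blt in h; lra]. Qed.

Lemma half2 D Rlo Rhi F R0 :
  rich_single_crossing D -> is_mechanism (interval D Rlo Rhi) F ->
  finite_range (interval D Rlo Rhi) F ->
  monotone_mech (interval D Rlo Rhi) F -> VF_continuous D (interval D Rlo Rhi) F ->
  interval D Rlo Rhi R0 ->
  forall Q, interval D Rlo Rhi Q -> tR R0 <= tR Q -> bbox R0 (F Q) -> ~ P R0 (F Q) (F R0).
Proof.
  intros Hd Hm Hfin Hmono Hvf h0 Q0 hq0 hle hbq0 hP0.
  destruct (surj_fun D Hd) as [pk Hpk].
  pose proof (D_rc D R0 Hd (proj1 h0)) as H0.
  pose proof (rc_pos R0 H0) as H0p.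
  set (B := fun Q => interval D Rlo Rhi Q /\ tR R0 <= tR Q /\ bbox R0 (F Q) /\ P R0 (F Q) (F R0)).
  set (A := fun t => exists Q, B Q /\ tR Q = - t).
  assert (Hb : bound A). { exists (- tR R0). intros t [Q [[_ [h _]] e]]. lra. }
  assert (Hne : exists t, A t). { exists (- tR Q0). exists Q0. split; [split; auto|lra]. }
  destruct (completeness A Hb Hne) as [mu Hmu].
  set (sg := - mu).
  assert (hs1 : sg <= tR Q0). { assert (- tR Q0 <= mu); [|unfold sg; lra].
    apply (proj1 Hmu). exists Q0; split; [split; auto|lra]. }
  assert (hs2 : tR R0 <= sg). { assert (mu <= - tR R0); [|unfold sg; lra].
    apply (proj2 Hmu). intros t [Q [[_ [h _]] e]]. lra. }
  assert (pkB : forall t, A t -> B (pk (- t))).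
  { intros t [Q [hB e]]. destruct (Hpk (- t)) as [hD ht]; [destruct hB as [_ [h _]]; lra|].
    assert (pk (- t) = Q) by (apply (D_inj D); auto; [apply hB|lra]). rewrite H; auto. }
  assert (dsg : forall t, tR R0 <= t <= tR Q0 -> interval D Rlo Rhi (pk t)).
  { intros t ht. destruct (Hpk t) as [hD e]; [lra|]. split; auto.
    unfold precsim. destruct hq0 as [_ [_ a]]. destruct h0 as [_ [b _]]. unfold precsim in *. lra. }
  set (Qs := pk sg).
  assert (hQs : D Qs /\ tR Qs = sg) by (apply Hpk; lra).
  assert (dQs : interval D Rlo Rhi Qs) by (apply dsg; lra).
  destruct (lub_seq A mu Hmu Hne) as [s Hs].
  destruct (runmax_prop A s mu Hs) as [rA [rM rC]].
  set (Rs := fun n => pk (- runmax s n)).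
  assert (BRs : forall n, B (Rs n)) by (intros n; unfold Rs; apply pkB; apply rA).
  assert (tRs : forall n, tR (Rs n) = - runmax s n).
  { intros n. destruct (rA n) as [Q [[_ [h _]] e]]. apply Hpk. lra. }
  destruct (vf_apply D Rlo Rhi F Qs Rs Hd Hfin Hmono Hvf dQs) as [N [HN [Bc Ic]]].
  { intros n; apply BRs. }
  { right. intros n. unfold precsim. rewrite !tRs. pose proof (rM n). lra. }
  { rewrite (proj2 hQs). apply (Un_cv_ext' (opp_seq (runmax s))).
    - intros n. rewrite tRs. reflexivity.
    - apply CV_opp. auto. }
  set (c := F (Rs N)) in *.
  assert (Pc : P R0 c (F R0)) by apply (BRs N).
  assert (Bc0 : bbox R0 c) by apply (BRs N).
  assert (Hle : ble (F Qs) c).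
  { destruct (Rlt_or_le sg (tR (Rs N))) as [h|h].
    - apply Hmono; auto. apply BRs. unfold prec. lra.
    - assert (sg <= tR (Rs N)). { rewrite tRs. assert (runmax s N <= mu); [|unfold sg; lra].
        apply (proj1 Hmu). auto. }
      assert (e : Rs N = Qs) by (apply (D_inj D); [auto|apply BRs|apply hQs|lra]).
      unfold c. rewrite e. apply ble_refl. }
  pose proof (Hm Qs dQs) as BQs. pose proof (Hm R0 h0) as B0.
  assert (BQs0 : bbox R0 (F Qs)).
  { apply (box_fst _ Qs); auto. pose proof (ble_fst _ _ Hle). pose proof (box_fst_le _ _ Bc0). lra. }
  assert (PQs : P R0 (F Qs) (F R0)).
  { destruct (classic (F Qs = c)) as [e|ne]; [rewrite e; auto|].
    assert (Hlt : blt (F Qs) c) by (apply ble_blt; auto).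
    destruct (Req_dec sg (tR R0)) as [e|ne2].
    - exfalso. assert (Qs = R0) by (apply (D_inj D); [auto|apply hQs|apply h0|lra]).
      subst Qs. rewrite H in Ic. apply (P_notR _ _ _ Pc). apply Ic.
    - assert (hp : P R0 (F Qs) c).
      { apply (cr_lo D Qs R0); auto; [apply hQs|apply h0|apply I_sym; auto|lra]. }
      apply PR_trans with c; auto. apply P_R; auto. }
  assert (hgt : tR R0 < sg).
  { destruct (Req_dec sg (tR R0)) as [e|ne2]; [|lra]. exfalso.
    assert (Qs = R0) by (apply (D_inj D); [auto|apply hQs|apply h0|lra]).
    rewrite H in PQs. apply (P_irrefl _ _ PQs). }
  set (r := fun n => sg + - (sg - tR R0) / (INR n + 2)).
  assert (hr : forall n, tR R0 < r n < sg).
  { intros n. pose proof (frac_strict (sg - tR R0) n 2 ltac:(lra) ltac:(lra)). unfold r.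
    unfold Rdiv in *. lra. }
  set (Rs' := fun n => pk (r n)).
  assert (tRs' : forall n, tR (Rs' n) = r n) by (intros n; apply Hpk; specialize (hr n); lra).
  assert (dRs' : forall n, interval D Rlo Rhi (Rs' n)) by (intros n; apply dsg; specialize (hr n); lra).
  assert (notB : forall n, rel R0 (F R0) (F (Rs' n))).
  { intros n.
    assert (hl : ble (F (Rs' n)) (F Qs)).
    { apply Hmono; auto. unfold prec. rewrite tRs', (proj2 hQs). apply hr. }
    assert (hb : bbox R0 (F (Rs' n))).
    { apply (box_fst _ (Rs' n)); [apply Hm; auto|].
      pose proof (ble_fst _ _ hl). pose proof (box_fst_le _ _ BQs0). lra. }
    apply notP; auto.
    intros hp. assert (A (- r n)). { exists (Rs' n). split; [|rewrite tRs'; lra].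
        split; auto. split; auto. rewrite tRs'. specialize (hr n); lra. }
    assert (- r n <= mu) by (apply (proj1 Hmu); auto). specialize (hr n). unfold sg in hr. lra. }
  destruct (vf_apply D Rlo Rhi F Qs Rs' Hd Hfin Hmono Hvf dQs) as [N' [HN' [Bc' Ic']]]; auto.
  { left. intros n. unfold precsim. rewrite !tRs'. unfold r.
    pose proof (frac_decr (sg - tR R0) n 2 ltac:(lra) ltac:(lra)). unfold Rdiv in *. lra. }
  { rewrite (proj2 hQs). apply (Un_cv_ext' r). intros; rewrite tRs'; auto. apply cv_lin; lra. }
  set (c' := F (Rs' N')) in *.
  assert (Hle' : ble c' (F Qs)).
  { apply Hmono; auto. unfold prec. rewrite tRs', (proj2 hQs). apply hr. }
  pose proof (notB N') as nb. fold c' in nb.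
  destruct (classic (c' = F Qs)) as [e|ne].
  - rewrite e in nb. apply (P_notR _ _ _ PQs nb).
  - assert (Hlt : blt c' (F Qs)) by (apply ble_blt; auto).
    assert (hp : P R0 c' (F Qs)).
    { apply (cr_lo D Qs R0); auto; [apply hQs|apply h0|lra]. }
    assert (Bc'0 : bbox R0 c').
    { apply (box_fst _ Qs); auto. pose proof (ble_fst _ _ Hle'). pose proof (box_fst_le _ _ BQs0). lra. }
    assert (hp2 : P R0 c' (F R0)).
    { apply PR_trans with (F Qs); auto. apply P_R; auto. }
    apply (P_notR _ _ _ hp2 nb).
Qed.


Theorem mainTheorem17 (D : pref -> Prop) (Rlo Rhi : pref) (F : pref -> bundle) :
  rich_single_crossing D -> D Rlo -> D Rhi ->
  is_mechanism (interval D Rlo Rhi) F ->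
  finite_range (interval D Rlo Rhi) F ->
  (forall Rp, interval D Rlo Rhi Rp -> I Rp (F Rp) (0, 0) -> F Rp = (0, 0)) ->
  (restricted_SP (interval D Rlo Rhi) F <->
   (monotone_mech (interval D Rlo Rhi) F /\ VF_continuous D (interval D Rlo Rhi) F)).
Proof.
  intros Hd hlo hhi Hm Hfin Hz. split.
  - intros Hsp. split.
    + apply SP_mono; auto.
    + apply SP_VF; auto.
  - intros [Hmono Hvf] Rp Rq hp hq hb.
    apply (notP Rp (F Rq) (F Rp)).
    + apply (D_rc D Rp Hd (proj1 hp)).
    + exact hb.
    + apply Hm; auto.
    + destruct (Rle_or_lt (tR Rq) (tR Rp)) as [h|h].
      * apply (half1 D Rlo Rhi F Rp); auto.
      * apply (half2 D Rlo Rhi F Rp); auto. lra.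
Qed.
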